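(* Let $D\ge1$ and let $\mathcal{F}$ be a collection of pairwise non-overlapping simplices on $\gamma_D$ in $\mathbb{R}^D$ whose vertex sets have union $V$ with $D+1\le|V|\le D+2$. Then $\mathcal{F}$ can be extended to a triangulation of $\mathrm{conv}(V)$ without adding new vertices, i.e. there is a triangulation of $\mathrm{conv}(V)$ with all vertices in $V$ containing every simplex of $\mathcal{F}$.
   Context: $\gamma_D=\{(t,t^2,\dots,t^D):t\in\mathbb{R}\}$. A simplex on $\gamma_D$ is $\mathrm{conv}(\sigma)$ for $\sigma\subseteq\gamma_D$ with $|\sigma|\le D+1$. Simplices overlap if $\mathrm{conv}(\sigma)\cap\mathrm{conv}(\tau)\supsetneq\mathrm{conv}(\sigma\cap\tau)$. *)

(* Defs.v *)
From mathcomp Require Import all_boot all_order all_algebra.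
From mathcomp Require Import boolp classical_sets reals.
Set Implicit Arguments. Unset Strict Implicit. Unset Printing Implicit Defensive.
Import Order.TTheory GRing.Theory Num.Theory.
Local Open Scope ring_scope.
Local Open Scope classical_set_scope.

Section Defs.
Variables (R : realType) (D : nat).
Notation pt := 'rV[R]_D.

Definition moment (t : R) : pt := \row_(i < D) t ^+ i.+1.

Definition gamma : set pt := range moment.

Definition conv (A : set pt) : set pt :=
  [set p | exists (n : nat) (x : 'I_n -> pt) (w : 'I_n -> R),
      (forall i, A (x i)) /\ (forall i, 0 <= w i) /\
      \sum_(i < n) w i = 1 /\ p = \sum_(i < n) w i *: x i].

Definition card_between (A : set pt) (lo hi : nat) : Prop :=
  exists s : seq pt, uniq s /\ (lo <= size s <= hi)%N /\ A = [set` s].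

(* a simplex on gamma_D, represented by its vertex set sigma:
   sigma is a subset of gamma_D with |sigma| <= D+1 *)
Definition simplex_on_curve (sigma : set pt) : Prop :=
  sigma `<=` gamma /\
  exists s : seq pt, uniq s /\ (size s <= D.+1)%N /\ sigma = [set` s].

Definition overlap (sigma tau : set pt) : Prop :=
  conv (sigma `&` tau) `<` conv sigma `&` conv tau.

(* a triangulation of conv(V) with all vertices in V: a collection of
   simplices (vertex sets) contained in V, closed under taking faces,
   pairwise non-overlapping (so any two meet in a common face), whose
   union is conv(V) *)
Definition triangulation (V : set pt) (T : set (set pt)) : Prop :=
  (forall sigma, T sigma -> simplex_on_curve sigma /\ sigma `<=` V) /\
  (forall sigma tau, T sigma -> tau `<=` sigma -> T tau) /\
  (forall sigma tau, T sigma -> T tau -> ~ overlap sigma tau) /\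
  \bigcup_(sigma in T) conv sigma = conv V.

End Defs.

(* Main.v *)
Require Import Defs.
From mathcomp Require Import all_boot all_order all_algebra.
From mathcomp Require Import boolp classical_sets reals.
From mathcomp Require Import zify ring lra.
Set Implicit Arguments. Unset Strict Implicit. Unset Printing Implicit Defensive.
Import Order.TTheory GRing.Theory Num.Theory.
Local Open Scope ring_scope.
Local Open Scope classical_set_scope.

Section Main.
Variables (R : realType) (D : nat) (s : seq 'rV[R]_D).
Hypothesis hD : (0 < D)%N.
Hypothesis us : uniq s.
Hypothesis sg : forall x, x \in s -> gamma x.
Local Notation N := (size s).

Definition v (j : 'I_N) : 'rV[R]_D := nth 0 s j.
Definition tp (j : 'I_N) : R := v j 0 (Ordinal hD).

Lemma vE j : v j = moment D (tp j).
Proof.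
have [t _ ht] := sg (mem_nth 0 (ltn_ord j)).
by rewrite /tp /v -ht mxE expr1.
Qed.

Lemma v_inj : injective v.
Proof.
move=> i j /eqP; rewrite /v nth_uniq // => /eqP h; exact: val_inj.
Qed.

Lemma tp_inj : injective tp.
Proof. by move=> i j h; apply: v_inj; rewrite !vE h. Qed.

Definition dep (c : 'I_N -> R) :=
  forall k, (k <= D)%N -> \sum_j c j * tp j ^+ k = 0.

Lemma dep_of c : \sum_j c j = 0 -> \sum_j c j *: v j = 0 -> dep c.
Proof.
move=> h0 h1 [|k] hk.
  by under eq_bigr do rewrite expr0 mulr1.
have := congr1 (fun M : 'rV[R]_D => M 0 (Ordinal hk)) h1.
rewrite /= summxE mxE => h; rewrite -[RHS]h; apply: eq_bigr => j _; rewrite mxE vE mxE.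
by [].
Qed.

Lemma dep_to c : dep c -> \sum_j c j = 0 /\ \sum_j c j *: v j = 0.
Proof.
move=> h; split.
  by rewrite -[RHS](h 0%N) //; apply: eq_bigr => j _; rewrite expr0 mulr1.
apply/rowP => k; rewrite summxE mxE.
under eq_bigr do rewrite mxE vE mxE.
exact: h k.+1 (ltn_ord k).
Qed.

Lemma genpos c (I : {set 'I_N}) : (#|I| <= D.+1)%N ->
  (forall j, j \notin I -> c j = 0) -> dep c -> forall j, c j = 0.
Proof.
move=> hI hout hc i.
case: (boolP (i \in I)) => iI; last exact: hout.
pose p := \prod_(j in I :\ i) ('X - (tp j)%:P).
have sp : (size p <= D.+1)%N.
  rewrite /p -big_enum size_prod_XsubC -cardE.
  by move: hI; rewrite (cardsD1 i I) iI.
have key : \sum_l c l * p.[tp l] = 0.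
  under eq_bigr do rewrite (horner_coef_wide _ sp) mulr_sumr.
  rewrite exchange_big /= big1 // => k _.
  under eq_bigr do rewrite mulrCA.
  by rewrite -mulr_sumr hc ?mulr0 // -ltnS ltn_ord.
have e : \sum_l c l * p.[tp l] = c i * p.[tp i].
  rewrite (bigD1 i) //= big1 ?addr0 // => l hl.
  case: (boolP (l \in I)) => lI; last by rewrite hout // mul0r.
  rewrite /p horner_prod (bigD1 l) /=; last by rewrite !inE hl lI.
  by rewrite hornerXsubC subrr mul0r mulr0.
have pi : p.[tp i] != 0.
  rewrite /p horner_prod; apply/prodf_neq0 => j; rewrite !inE => /andP [ji _].
  rewrite hornerXsubC subr_eq0; apply/eqP => /tp_inj h.
  by rewrite h eqxx in ji.
by move: key; rewrite e => /eqP; rewrite mulf_eq0 (negbTE pi) orbF => /eqP.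
Qed.

Lemma dep_exists : N = D.+2 -> exists c, dep c /\ exists j, c j != 0.
Proof.
move=> hN.
pose M := \matrix_(j < N, k < D.+1) tp j ^+ k.
have : kermx M != 0.
  rewrite kermx_eq0 /row_free; apply/negP => /eqP h.
  by have := rank_leq_col M; rewrite h hN ltnn.
case/matrix0Pn => i [j hij].
exists (fun j => kermx M i j); split; last by exists j.
move=> k hk.
have := congr1 (fun A : 'M[R]_(N, D.+1) => A i (Ordinal (hk : (k < D.+1)%N))) (mulmx_ker M).
rewrite [RHS]mxE => h; rewrite -[RHS]h [RHS]mxE; apply: eq_bigr => l _; by rewrite [M _ _]mxE.
Qed.


Lemma cnt1 y : y \in s -> exists j : 'I_N, forall j', (y == v j') = (j' == j).
Proof.
move=> ys; have hi : (index y s < N)%N by rewrite index_mem.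
exists (Ordinal hi) => j'.
by rewrite -{1}(nth_index 0 ys) /v nth_uniq // eq_sym.
Qed.

Lemma conv_sub (A B : set 'rV[R]_D) : A `<=` B -> conv A `<=` conv B.
Proof.
move=> AB p [n [x [w [hx [hw [h1 hp]]]]]]; exists n, x, w; do !split => //.
by move=> i; apply: AB.
Qed.

Definition coefs (A : set 'rV[R]_D) p (a : 'I_N -> R) :=
  (forall j, 0 <= a j) /\ (forall j, a j != 0 -> A (v j)) /\
  \sum_j a j = 1 /\ p = \sum_j a j *: v j.

Lemma convP (A : set 'rV[R]_D) p : A `<=` [set` s] ->
  (conv A p <-> exists a, coefs A p a).
Proof.
move=> As; split.
- case=> n [x [w [hx [hw [h1 ->]]]]].
  have xs : forall k, x k \in s by move=> k; exact: As _ (hx k).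
  exists (fun j => \sum_k (x k == v j)%:R * w k); split; [|split; [|split]].
  + move=> j; apply: sumr_ge0 => k _; apply: mulr_ge0 => //; exact: ler0n.
  + move=> j hj; case: (pickP (fun k => x k == v j)) => [k /eqP <- | h0].
      exact: hx.
    by move: hj; rewrite big1 ?eqxx // => k _; rewrite h0 mul0r.
  + rewrite exchange_big /= -[RHS]h1; apply: eq_bigr => k _; rewrite -mulr_suml.
    have [j hj] := cnt1 (xs k).
    rewrite (bigD1 j) //= big1 ?addr0; first by rewrite hj eqxx mul1r.
    by move=> j' hj'; rewrite hj (negbTE hj').
  + symmetry; under eq_bigr do rewrite scaler_suml.
    rewrite exchange_big /=; apply: eq_bigr => k _.
    have [j hj] := cnt1 (xs k).
    have xj : x k = v j by apply/eqP; rewrite hj.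
    rewrite (bigD1 j) //= big1 ?addr0; first by rewrite hj eqxx mul1r xj.
    by move=> j' hj'; rewrite hj (negbTE hj') mul0r scale0r.
- case=> a [ha [hA [h1 ->]]].
  have [j0 hj0] : exists j0, a j0 != 0.
    apply: contrapT => hn; move: h1; rewrite big1 => [/eqP|j _].
      by rewrite eq_sym oner_eq0.
    apply: contrapT => hj; apply: hn; exists j; exact/eqP.
  exists N, (fun j => if a j != 0 then v j else v j0), a.
  split; [|split; [|split]] => //.
  + by move=> j; case: ifP => [/hA|_]; [by [] | exact: hA].
  + apply: eq_bigr => j _; case: ifP => // /negbFE/eqP ->; by rewrite !scale0r.
Qed.


Lemma dep_diff (A B : set 'rV[R]_D) p a b :
  coefs A p a -> coefs B p b -> dep (fun j => a j - b j).
Proof.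
case=> _ [_ [ha1 hap]] [_ [_ [hb1 hbp]]]; apply: dep_of.
  by rewrite sumrB ha1 hb1 subrr.
under eq_bigr do rewrite scalerBl.
by rewrite sumrB -hap -hbp subrr.
Qed.

Lemma dep_line lam c : N = D.+2 -> dep lam -> (exists j, lam j != 0) ->
  dep c -> exists mu, forall j, c j = mu * lam j.
Proof.
move=> hN hl [j1 hj1] hc; exists (c j1 / lam j1).
have h : forall j, c j - c j1 / lam j1 * lam j = 0.
  apply: (@genpos (fun j => c j - c j1 / lam j1 * lam j) [set~ j1]).
- by rewrite cardsC1 card_ord hN.
- by move=> j; rewrite !inE negbK => /eqP ->; rewrite divfK // subrr.
- move=> k hk.
  have -> : \sum_i (c i - c j1 / lam j1 * lam i) * tp i ^+ k =
    \sum_i c i * tp i ^+ k - c j1 / lam j1 * \sum_i lam i * tp i ^+ k.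
    by rewrite mulr_sumr -sumrB; apply: eq_bigr => i _; rewrite mulrBl mulrA.
  by rewrite hc // hl // mulr0 subrr.
move=> j; apply/eqP; rewrite -subr_eq0; apply/eqP; exact: h.
Qed.

Lemma dep_nz lam : N = D.+2 -> dep lam -> (exists j, lam j != 0) ->
  forall j, lam j != 0.
Proof.
move=> hN hl [j1 hj1] j; apply/negP => /eqP h0.
have h : lam j1 = 0.
  apply: (@genpos lam [set~ j]) => //.
  - by rewrite cardsC1 card_ord hN.
  - by move=> j'; rewrite !inE negbK => /eqP ->.
by rewrite h eqxx in hj1.
Qed.

Lemma dep_opp lam : dep lam -> dep (fun j => - lam j).
Proof.
by move=> hl k hk; under eq_bigr do rewrite mulNr; rewrite sumrN hl // oppr0.
Qed.

Lemma dep_pos lam : dep lam -> (exists j, lam j != 0) -> exists j, 0 < lam j.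
Proof.
move=> hl [j1 hj1]; apply: contrapT => h.
have s0 : \sum_j - lam j = 0 by rewrite sumrN (dep_to hl).1 oppr0.
have hge : forall j, predT j -> 0 <= - lam j.
  move=> j _; rewrite oppr_ge0 leNgt; apply/negP => hj; apply: h; by exists j.
have h0 := @psumr_eq0P _ _ predT (fun j => - lam j) hge s0 j1 isT.
by move: hj1; rewrite -oppr_eq0 h0 eqxx.
Qed.

Definition Tl (lam : 'I_N -> R) (sigma : set 'rV[R]_D) :=
  sigma `<=` [set` s] /\ ~ (forall j, 0 < lam j -> sigma (v j)).

Lemma filt_simplex (sigma : set 'rV[R]_D) : sigma `<=` [set` s] ->
  (count (fun x => `[< sigma x >]) s <= D.+1)%N -> simplex_on_curve sigma.
Proof.
move=> hs hc; split.
  by move=> x /hs; exact: sg.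
exists [seq x <- s | `[< sigma x >]]; split; first exact: filter_uniq.
split; first by rewrite size_filter.
apply/seteqP; split => x /=.
  move=> hx; rewrite mem_filter; apply/andP; split; [exact/asboolP | exact: hs].
by rewrite mem_filter => /andP [/asboolP ? _].
Qed.

Lemma count_miss (sigma : set 'rV[R]_D) j : ~ sigma (v j) -> N = D.+2 ->
  (count (fun x => `[< sigma x >]) s <= D.+1)%N.
Proof.
move=> hj hN.
have := count_predC (fun x => `[< sigma x >]) s.
have : (0 < count (predC (fun x => `[< sigma x >])) s)%N.
  rewrite -has_count; apply/hasP; exists (v j); first exact: mem_nth.
  by rewrite /=; apply/negP => /asboolP.
lia.
Qed.

Lemma miss_pt (sigma : set 'rV[R]_D) (lam : 'I_N -> R) : ~ (forall j, 0 < lam j -> sigma (v j)) ->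
  exists j, 0 < lam j /\ ~ sigma (v j).
Proof.
move=> nS; apply: contrapT => h; apply: nS => j lj; apply: contrapT => nj.
by apply: h; exists j.
Qed.


Lemma Tl_nonoverlap lam : N = D.+2 -> dep lam -> (exists j, lam j != 0) ->
  forall sigma tau, Tl lam sigma -> Tl lam tau -> ~ overlap sigma tau.
Proof.
move=> hN hl hnz sigma tau [sS nS] [tS nT] [_ hpr]; apply: hpr => p [ps pt].
move/(convP _ sS): ps => [a ha]; move/(convP _ tS): pt => [b hb].
have [mu hmu] := dep_line hN hl hnz (dep_diff ha hb).
case: ha => ha0 [haS [ha1 hap]]; case: hb => hb0 [hbS [hb1 hbp]].
have [j1 [l1 n1]] := miss_pt nS; have [j2 [l2 n2]] := miss_pt nT.
have a1 : a j1 = 0 by apply: contrapT => /eqP /haS.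
have b2 : b j2 = 0 by apply: contrapT => /eqP /hbS.
have m1 : mu * lam j1 <= 0 by rewrite -hmu a1 sub0r oppr_le0.
have m2 : 0 <= mu * lam j2 by rewrite -hmu b2 subr0.
have mu0 : mu = 0 by nra.
have ab : forall j, a j = b j.
  by move=> j; apply/subr0_eq; rewrite hmu mu0 mul0r.
apply/(convP (A := sigma `&` tau)); first by move=> x [/sS].
exists a; split; [by [] | split; [|by split]].
by move=> j hj; split; [exact: haS | apply: hbS; rewrite -ab].
Qed.

Lemma Tl_cover lam : dep lam -> (exists j, 0 < lam j) ->
  conv [set` s] `<=` \bigcup_(sigma in Tl lam) conv sigma.
Proof.
move=> hl [j0 hj0] p /(convP _ (@subset_refl _ _)) [a [ha0 [_ [ha1 hap]]]].
case: (@arg_minP _ _ _ j0 (fun j => 0 < lam j) (fun j => a j / lam j) hj0)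
  => i li hmin.
set mu := a i / lam i.
have mu0 : 0 <= mu by apply: divr_ge0 => //; exact: ltW.
have lin : lam i != 0 by rewrite gt_eqF.
exists [set x | x \in s /\ x <> v i].
  split; first by move=> x [].
  by move=> h; have [_] := h i li; apply.
apply/(convP (A := [set x | x \in s /\ x <> v i])); first by move=> x [].
exists (fun j => a j - mu * lam j); split; [|split; [|split]].
- move=> j; rewrite subr_ge0.
  have [lj|lj] := ltP 0 (lam j).
    by have := hmin j lj; rewrite ler_pdivlMr.
  by have := ha0 j; nra.
- move=> j hj; split; first exact: mem_nth.
  move=> /v_inj ji; move: hj; rewrite ji /mu divfK // subrr eqxx.
  by [].
- by rewrite sumrB -mulr_sumr (dep_to hl).1 mulr0 subr0.
- under eq_bigr do rewrite scalerBl -scalerA.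
  by rewrite sumrB -scaler_sumr (dep_to hl).2 scaler0 subr0.
Qed.

Lemma Tl_tri lam : N = D.+2 -> dep lam -> (exists j, lam j != 0) ->
  triangulation [set` s] (Tl lam).
Proof.
move=> hN hl hnz; split; [|split; [|split]].
- move=> sigma [sS nS]; split => //; apply: filt_simplex sS _.
  have [j1 [_ n1]] := miss_pt nS; exact: count_miss n1 hN.
- move=> sigma tau [sS nS] ts; split; first exact: subset_trans ts sS.
  by move=> h; apply: nS => j lj; apply: ts; apply: h.
- exact: Tl_nonoverlap.
- apply/seteqP; split.
    by move=> p [sigma [sS _] hp]; exact: conv_sub sS _ hp.
  exact: Tl_cover (dep_pos hl hnz).
Qed.


Lemma miss_simplex (sigma : set 'rV[R]_D) : simplex_on_curve sigma -> N = D.+2 ->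
  exists j, ~ sigma (v j).
Proof.
case=> _ [s' [us' [hs' ->]]] hN; apply: contrapT => h.
have : {subset s <= s'}.
  move=> x xs; have [j hj] := cnt1 xs.
  have -> : x = v j by apply/eqP; rewrite hj.
  by apply: contrapT => nj; apply: h; exists j.
move/(uniq_leq_size us); rewrite hN => h'; by have := leq_trans h' hs'; rewrite ltnn.
Qed.

Lemma not_overlap_sub (sigma tau : set 'rV[R]_D) :
  ~ overlap sigma tau -> conv sigma `&` conv tau `<=` conv (sigma `&` tau).
Proof.
move=> h; apply: contrapT => h2; apply: h; split => //.
move=> p hp; split; apply: conv_sub hp; by move=> x [].
Qed.

Lemma radon lam sigma tau : N = D.+2 -> dep lam -> (exists j, lam j != 0) ->
  simplex_on_curve sigma -> sigma `<=` [set` s] ->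
  simplex_on_curve tau -> tau `<=` [set` s] ->
  (forall j, 0 < lam j -> sigma (v j)) -> (forall j, lam j < 0 -> tau (v j)) ->
  ~ overlap sigma tau -> False.
Proof.
move=> hN hl hnz ssig sS stau tS hs ht hov.
have lnz := dep_nz hN hl hnz.
have [j0 l0] := dep_pos hl hnz.
pose pos j := if 0 < lam j then lam j else 0.
pose neg j := if lam j < 0 then - lam j else 0.
have pos0 : forall j, 0 <= pos j by move=> j; rewrite /pos; case: ifP => // /ltW.
have neg0 : forall j, 0 <= neg j.
  by move=> j; rewrite /neg; case: ifP => // h; rewrite oppr_ge0 ltW.
have lpn : forall j, lam j = pos j - neg j.
  move=> j; rewrite /pos /neg; have [lj|lj|lj] := ltgtP 0 (lam j).
  - by rewrite subr0.
  - by rewrite sub0r opprK.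
  - by rewrite -lj subr0.
set S := \sum_j pos j.
have S0 : 0 < S.
  rewrite /S (bigD1 j0) //=.
  have : 0 <= \sum_(j | j != j0) pos j by apply: sumr_ge0.
  have : pos j0 = lam j0 by rewrite /pos l0.
  lra.
have SN : \sum_j neg j = S.
  have e : \sum_j lam j = \sum_j pos j - \sum_j neg j.
    by rewrite -sumrB; apply: eq_bigr => j _; exact: lpn.
  by move: (dep_to hl).1; rewrite e => /eqP; rewrite subr_eq0 => /eqP.
have Snz : S != 0 by rewrite gt_eqF.
pose a j := pos j / S.
pose b j := neg j / S.
pose p := \sum_j a j *: v j.
have ca : coefs sigma p a.
  split; [|split; [|split]] => //.
  - by move=> j; apply: divr_ge0 => //; exact: ltW.
  - move=> j; rewrite /a /pos; case: ifP => [lj _|]; first exact: hs.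
    by rewrite mul0r eqxx.
  - by rewrite -mulr_suml divff.
have cb : coefs tau p b.
  split; [|split; [|split]] => //.
  - by move=> j; apply: divr_ge0 => //; exact: ltW.
  - move=> j; rewrite /b /neg; case: ifP => [lj _|]; first exact: ht.
    by rewrite mul0r eqxx.
  - by rewrite -mulr_suml SN divff.
  - apply/esym/subr0_eq; rewrite -sumrB.
    under eq_bigr do rewrite -scalerBl /a /b -mulrBl.
    rewrite (eq_bigr (fun i => (- S^-1) *: (lam i *: v i))); last first.
      by move=> i _; rewrite scalerA lpn; congr (_ *: _); field.
    by rewrite -scaler_sumr (dep_to hl).2 scaler0.
have : conv (sigma `&` tau) p.
  have hsub := not_overlap_sub hov; apply: hsub; split.
    by apply/(convP _ sS); exists a.
  by apply/(convP _ tS); exists b.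
case/(convP _ (A := sigma `&` tau)); first by move=> x [/sS].
move=> c hc.
have [mu hmu] := dep_line hN hl hnz (dep_diff ca hc).
case: hc => hc0 [hcS _].
have [i ni] := miss_simplex ssig hN.
have [j nj] := miss_simplex stau hN.
have li : lam i < 0.
  rewrite lt_neqAle lnz /= leNgt; apply/negP => /hs; exact: ni.
have lj : 0 < lam j.
  rewrite lt_neqAle eq_sym lnz /= leNgt; apply/negP => /ht; exact: nj.
have ci : c i = 0 by apply: contrapT => /eqP /hcS [].
have cj : c j = 0 by apply: contrapT => /eqP /hcS [].
have ai : a i = 0 by rewrite /a /pos ltNge (ltW li) /= mul0r.
have aj : a j = lam j / S by rewrite /a /pos lj.
have : mu * lam i = 0 by rewrite -hmu ai ci subrr.
move/eqP; rewrite mulf_eq0 (negbTE (lnz i)) orbF => /eqP mu0.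
have := hmu j; rewrite aj cj subr0 mu0 mul0r => /eqP.
by rewrite mulf_eq0 invr_eq0 (negbTE Snz) (negbTE (lnz j)).
Qed.


Lemma main_sec (F : set (set 'rV[R]_D)) :
  (forall sigma, F sigma -> simplex_on_curve sigma) ->
  (forall sigma tau, F sigma -> F tau -> ~ overlap sigma tau) ->
  (forall sigma, F sigma -> sigma `<=` [set` s]) ->
  (D.+1 <= N <= D.+2)%N ->
  exists T, triangulation [set` s] T /\ F `<=` T.
Proof.
move=> hF hnov Fsub hsz.
have [hN|hN] : N = D.+1 \/ N = D.+2 by lia.
- exists (fun sigma => sigma `<=` [set` s]); split; last by move=> sigma /Fsub.
  split; [|split; [|split]].
  + move=> sigma hsig; split => //; apply: filt_simplex => //.
    by rewrite -hN; exact: count_size.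
  + by move=> sigma tau h1 h2; exact: subset_trans h2 h1.
  + move=> sigma tau sS tS [_ hpr]; apply: hpr => p [ps pt].
    move/(convP _ sS): ps => [a ha]; move/(convP _ tS): pt => [b hb].
    have hd := dep_diff ha hb.
    have ab : forall j, a j = b j.
      move=> j; apply/subr0_eq; apply: (@genpos (fun j => a j - b j) [set: 'I_N]) => //.
        by rewrite cardsT card_ord hN.
      by move=> j'; rewrite inE.
    case: ha => ha0 [haS [ha1 hap]]; case: hb => hb0 [hbS _].
    apply/(convP (A := sigma `&` tau)); first by move=> x [/sS].
    exists a; split; [by [] | split; [|by split]].
    by move=> j hj; split; [exact: haS | apply: hbS; rewrite -ab].
  + apply/seteqP; split.
      by move=> p [sigma sS hp]; exact: conv_sub sS _ hp.
    by move=> p hp; exists [set` s].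
- have [lam0 [hl0 hnz0]] := dep_exists hN.
  have [[sigma [Fs hs]]|nex] :=
    pselect (exists sigma, F sigma /\ forall j, 0 < lam0 j -> sigma (v j)).
  + have hnz1 : exists j, - lam0 j != 0.
      by case: hnz0 => j hj; exists j; rewrite oppr_eq0.
    exists (Tl (fun j => - lam0 j)); split; first exact: Tl_tri (dep_opp hl0) hnz1.
    move=> tau Ft; split; first exact: Fsub.
    move=> ht.
    apply: (radon hN hl0 hnz0 (hF _ Fs) (Fsub _ Fs) (hF _ Ft) (Fsub _ Ft) hs).
      by move=> j lj; apply: ht; rewrite oppr_gt0.
    exact: hnov.
  + exists (Tl lam0); split; first exact: Tl_tri.
    move=> tau Ft; split; first exact: Fsub.
    by move=> ht; apply: nex; exists tau.
Qed.

End Main.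

Theorem proposition4p5 (R : realType) (D : nat) (F : set (set 'rV[R]_D)) :
  (1 <= D)%N ->
  (forall sigma, F sigma -> simplex_on_curve sigma) ->
  (forall sigma tau, F sigma -> F tau -> ~ overlap sigma tau) ->
  card_between (\bigcup_(sigma in F) sigma) D.+1 D.+2 ->
  exists T : set (set 'rV[R]_D),
    triangulation (\bigcup_(sigma in F) sigma) T /\ F `<=` T.
Proof.
move=> hD hF hnov [s [us [hsz hV]]].
rewrite hV.
have sg : forall x, x \in s -> gamma x.
  move=> x xs; have : (\bigcup_(sigma in F) sigma) x by rewrite hV.
  by case=> sigma Fs sx; exact: (hF sigma Fs).1 _ sx.
have Fsub : forall sigma, F sigma -> sigma `<=` [set` s].
  by move=> sigma Fs x sx; rewrite -hV; exists sigma.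
exact: (main_sec hD us sg hF hnov Fsub hsz).
Qed.
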